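(* Let $(t_1,s_1),(t_2,s_2)\in\mathbb{C}^\times\times\mathbb{C}^\times$ with $t_1\ne t_2$ and $s_1\neq s_2$, let $X_1=A_2(t_1,s_1)$, $X_2=A_2(t_2,s_2)$, let $\varepsilon_0=\det(X_1)+\det(X_2)-\det(X_1+X_2)$, and for $n\in\mathbb{N}$ let $f_n(z)=\sum_{k=0}^{\lfloor n/2\rfloor}(-1)^k\frac{n}{n-k}\binom{n-k}{k}z^{n-2k}$. Then $(X_1X_2)^n+(X_2X_1)^n=f_n(\varepsilon_0)I_2$ for all $n\in\mathbb{N}$.
   Context: $\mathbb{C}^\times=\mathbb{C}\setminus\{0\}$; $A_2(t,s)=\begin{pmatrix} t & s\\ \frac{1-t^2}{s} & -t\end{pmatrix}$; $I_2$ is the $2\times2$ identity matrix; $\lfloor n/2\rfloor$ is the largest integer $\le n/2$. *)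

(* Defs.v *)
From HB Require Import structures.
From mathcomp Require Import all_boot all_order all_algebra.
From mathcomp Require Import complex.
From mathcomp Require Import Rstruct.
Set Implicit Arguments. Unset Strict Implicit. Unset Printing Implicit Defensive.
Import Order.TTheory GRing.Theory Num.Theory.
Local Open Scope ring_scope.

Notation Cplx := (Rdefinitions.R [i]).

Definition A2 (t s : Cplx) : 'M[Cplx]_2 :=
  \matrix_(i < 2, j < 2)
    if (i == 0) && (j == 0) then t
    else if (i == 0) then s
    else if (j == 0) then (1 - t ^+ 2) / s
    else - t.

Definition f_poly (n : nat) (z : Cplx) : Cplx :=
  \sum_(0 <= k < (n./2).+1)
    (-1) ^+ k * (n%:R / (n - k)%:R) * ('C(n - k, k))%:R * z ^+ (n - 2 * k).

(* Main.v *)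
Require Import Defs.
From HB Require Import structures.
From mathcomp Require Import all_boot all_order all_algebra.
From mathcomp Require Import complex.
From mathcomp Require Import Rstruct.
From mathcomp Require Import zify ring lra.
Import Order.TTheory GRing.Theory Num.Theory.
Local Open Scope ring_scope.

Definition T (n k : nat) (z : Cplx) : Cplx :=
  (-1) ^+ k * ('C(n - k, k))%:R * z ^+ (n - 2 * k).

Definition g n z := \sum_(k < n.+1) T n k z.

Lemma T_small n k z : (n < 2 * k)%N -> T n k z = 0.
Proof. move=> h; rewrite /T bin_small ?mulr0 ?mul0r //; lia. Qed.

Lemma zT n k z : z * T (n+1) (k+1) z =
  (-1) ^+ (k+1) * ('C(n - k, k+1))%:R * z ^+ (n - 2 * k).
Proof.
have e1 : (n + 1 - (k + 1) = n - k)%N by lia.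
case: (ltnP n (2*k+1)) => h.
  rewrite T_small; last by lia.
  rewrite bin_small ?mulr0 ?mul0r //; lia.
rewrite /T e1.
have -> : (n - 2 * k = (n + 1 - 2 * (k + 1)).+1)%N by lia.
by rewrite exprS; ring.
Qed.

Lemma T_rec n k z : T (n+2) (k+1) z = z * T (n+1) (k+1) z - T n k z.
Proof.
rewrite zT /T.
have -> : (n + 2 - (k + 1) = n + 1 - k)%N by lia.
have -> : (n + 2 - 2 * (k + 1) = n - 2 * k)%N by lia.
have hb : 'C(n + 1 - k, k + 1) = ('C(n - k, k + 1) + 'C(n - k, k))%N.
  case: (leqP k n) => h.
    have -> : (n + 1 - k = (n - k).+1)%N by lia.
    by rewrite addn1 binS.
  have -> : (n + 1 - k = 0)%N by lia.
  have -> : (n - k = 0)%N by lia.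
  rewrite !bin0n; case: k h => //= k _; by rewrite addn1.
rewrite hb natrD exprD expr1; ring.
Qed.

Lemma gW n M z : (n < M)%N -> g n z = \sum_(k < M) T n k z.
Proof.
move=> h; rewrite /g (big_ord_widen M (fun k => T n k z) h) big_mkcond /=.
apply eq_bigr => i _; case: ifP => // /negbT; rewrite -leqNgt => hi.
rewrite T_small //; lia.
Qed.

Lemma g_rec n z : g (n+2) z = z * g (n+1) z - g n z.
Proof.
rewrite (gW (n+1) (n+2).+1 z); last by lia.
rewrite (gW n (n+2) z); last by lia.
rewrite /g big_ord_recl.
rewrite [\sum_(k < (n + 2).+1) T (n+1) k z]big_ord_recl.
have -> : \sum_(i < n + 2) T (n + 2) (bump 0 i) z =
          \sum_(i < n + 2) (z * T (n + 1) (i+1) z - T n i z).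
  apply eq_bigr => i _; by rewrite -T_rec /bump /= add1n addn1.
rewrite big_split /= sumrN mulrDr mulr_sumr.
have -> : \sum_(i < n + 2) z * T (n + 1) (bump 0 i) z = \sum_(i < n + 2) z * T (n + 1) (i+1) z.
  apply eq_bigr => i _; congr (_ * T _ _ _); rewrite /bump; lia.
have -> : T (n + 2) 0 z = z * T (n + 1) 0 z.
  rewrite /T /= !subn0 !bin0 !mul1r.
  have -> : (n + 2 = (n + 1).+1)%N by lia.
  by rewrite exprS.
ring.
Qed.

Definition fc n k (z : Cplx) :=
    (-1) ^+ k * (n%:R / (n - k)%:R) * ('C(n - k, k))%:R * z ^+ (n - 2 * k).

Lemma fW n M z : (n./2 < M)%N -> f_poly n z = \sum_(k < M) fc n k z.
Proof.
move=> h; rewrite /f_poly big_mkord (big_ord_widen M (fun k => fc n k z) h) big_mkcond /=.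
apply eq_bigr => i _; case: ifP => // /negbT; rewrite -leqNgt => hi.
have : (n < i.*2)%N by rewrite -ltn_half_double.
rewrite -muln2 => hi'.
rewrite /fc bin_small ?mulr0 ?mul0r //; lia.
Qed.

Lemma fc_key m k z : fc (m+2) (k+1) z = T (m+2) (k+1) z - T m k z.
Proof.
rewrite /fc /T.
have -> : (m + 2 - (k + 1) = m + 1 - k)%N by lia.
have -> : (m + 2 - 2 * (k + 1) = m - 2 * k)%N by lia.
case: (ltnP m (2*k)) => h.
  rewrite !bin_small ?mulr0 ?mul0r ?subrr //; lia.
set j := (m - k)%N.
have ej : (m + 1 - k = j.+1)%N by rewrite /j; lia.
have em : (m + 2 = j + k + 2)%N by rewrite /j; lia.
rewrite ej em.
have hd := mul_bin_diag j.+1 k.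
rewrite !addn1.
set B := 'C(j.+1, k.+1) in hd *.
set C := 'C(j, k) in hd *.
clearbody B C.
have hd' : ((j+1)%:R : Cplx) * C%:R = ((k+1)%:R) * B%:R.
  by rewrite -!natrM !addn1 hd.
have nz : ((j+1)%:R : Cplx) != 0 by rewrite pnatr_eq0 addn1.
have -> : (C%:R : Cplx) = ((k+1)%:R) * B%:R / ((j+1)%:R : Cplx).
  by rewrite -hd' mulrC mulrA mulVf ?mul1r.
rewrite -(addn1 j) -(addn1 k) !natrD exprD expr1.
rewrite natrD in nz.
field; exact nz.
Qed.

Lemma f_g m z : f_poly (m+2) z = g (m+2) z - g m z.
Proof.
rewrite (fW (m+2) (m+2).+1 z); last first.
  rewrite ltn_half_double -muln2; lia.
rewrite (gW m (m+2) z); last by lia.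
rewrite big_ord_recl /g big_ord_recl.
have -> : \sum_(i < m + 2) fc (m + 2) (bump 0 i) z =
          \sum_(i < m + 2) (T (m + 2) (i+1) z - T m i z).
  apply eq_bigr => i _; rewrite -fc_key; congr (fc _ _ _); rewrite /bump; lia.
rewrite big_split /= sumrN.
have -> : \sum_(i < m + 2) T (m + 2) (bump 0 i) z = \sum_(i < m + 2) T (m + 2) (i+1) z.
  apply eq_bigr => i _; congr (T _ _ _); rewrite /bump; lia.
have -> : fc (m + 2) 0 z = T (m + 2) 0 z.
  rewrite /fc /T /= !subn0 !bin0 divff ?pnatr_eq0 ?addn2 // !mul1r ?muln0 ?subn0. 
  reflexivity.
ring.
Qed.

Lemma f1 z : f_poly 1 z = z.
Proof. by rewrite /f_poly big_nat1 /= subn0 divff ?oner_eq0 // bin0 !mul1r expr1. Qed.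

Lemma g0 z : g 0 z = 1.
Proof. by rewrite /g big_ord1 /T /= bin0 mul1r mul1r. Qed.
Lemma g1 z : g 1 z = z.
Proof. by rewrite /g big_ord_recr big_ord1 /T /= bin0 bin0n !mul1r mulr0 mul0r addr0 expr1. Qed.

Lemma f_rec k z : (0 < k)%N -> f_poly (k+2) z = z * f_poly (k+1) z - f_poly k z.
Proof.
case: k => // k _.
case: k => [|m].
  rewrite f1 (f_g 1) (f_g 0) (g_rec 1) g1 g0; ring.
have -> : (m.+2 + 2 = (m+2) + 2)%N by lia.
have -> : (m.+2 + 1 = (m+1) + 2)%N by lia.
have -> : (m.+2 = m + 2)%N by lia.
rewrite !f_g (g_rec (m+2)) (g_rec m).
have -> : (m + 2 + 1 = m + 1 + 2)%N by lia.
ring.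
Qed.
Lemma det2 (A : 'M[Cplx]_2) : \det A = A 0 0 * A 1 1 - A 0 1 * A 1 0.
Proof.
rewrite (expand_det_row _ 0) !big_ord_recr big_ord0 /= /cofactor !det_mx11 !mxE /=.
have e1 : widen_ord (m:=2) (leqnSn 1) ord_max = 0 by apply/val_inj.
have e2 : lift (0 : 'I_2) (0 : 'I_1) = 1 by apply/val_inj.
have e3 : lift (ord_max : 'I_2) (0 : 'I_1) = 0 by apply/val_inj.
have e4 : (ord_max : 'I_2) = 1 by apply/val_inj.
rewrite e1 e2 e3 e4 /=. ring.
Qed.

Lemma mul2 (A B : 'M[Cplx]_2) i j : (A *m B) i j = A i 0 * B 0 j + A i 1 * B 1 j.
Proof.
rewrite !mxE !big_ord_recr big_ord0 /= add0r.
have e1 : widen_ord (m:=2) (leqnSn 1) ord_max = 0 by apply/val_inj.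
have e4 : (ord_max : 'I_2) = 1 by apply/val_inj.
by rewrite e1 e4.
Qed.

Lemma A2E t s i j : A2 t s i j =
  if (i == 0) && (j == 0) then t else if (i == 0) then s
  else if (j == 0) then (1 - t ^+ 2) / s else - t.
Proof. by rewrite mxE. Qed.

Lemma ord2 (P : 'I_2 -> Prop) : P 0 -> P 1 -> forall i, P i.
Proof.
move=> h0 h1 [[|[|i]] hi] //.
  by have -> : Ordinal hi = 0 by apply/val_inj.
by have -> : Ordinal hi = 1 by apply/val_inj.
Qed.

Lemma A2sq t s : s != 0 -> A2 t s *m A2 t s = 1%:M.
Proof.
move=> hs; apply/matrixP; apply: ord2; apply: ord2;
  rewrite mul2 !A2E !mxE /=; field; by rewrite ?hs.
Qed.

Lemma sumMN t1 s1 t2 s2 : s1 != 0 -> s2 != 0 ->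
  let X1 := A2 t1 s1 in let X2 := A2 t2 s2 in
  X1 *m X2 + X2 *m X1 = (\det X1 + \det X2 - \det (X1 + X2))%:M.
Proof.
move=> h1 h2 /=; rewrite !det2.
apply/matrixP; apply: ord2; apply: ord2;
  rewrite [X in X = _]mxE !mul2 !mxE /=; field; by rewrite ?h1 ?h2.
Qed.

Lemma sc_rec (a b c : Cplx) : (a%:M : 'M[Cplx]_2) * b%:M - c%:M = (a*b - c)%:M.
Proof. by rewrite raddfB /= scalar_mxM mulmxE. Qed.

Lemma two : (1 : 'M[Cplx]_2) + 1 = (1+1)%:M.
Proof. by rewrite raddfD /= idmxE. Qed.

Theorem mainTheorem10 (t1 s1 t2 s2 : Cplx)
  (ht1 : t1 != 0) (hs1 : s1 != 0) (ht2 : t2 != 0) (hs2 : s2 != 0)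
  (ht : t1 != t2) (hs : s1 != s2) (n : nat) (hn : (0 < n)%N) :
  let X1 := A2 t1 s1 in
  let X2 := A2 t2 s2 in
  let eps0 := \det X1 + \det X2 - \det (X1 + X2) in
  (X1 *m X2) ^+ n + (X2 *m X1) ^+ n = (f_poly n eps0)%:M.
Proof.
move=> X1 X2 e.
have hsum := (@sumMN t1 s1 t2 s2 hs1 hs2); rewrite -/X1 -/X2 -/e in hsum.
set M := X1 *m X2; set N := X2 *m X1.
have hMN : M * N = 1.
  rewrite /M /N -!mulmxE mulmxA -(mulmxA X1) A2sq // mulmx1 A2sq //.
have hNM : N * M = 1.
  rewrite /M /N -!mulmxE mulmxA -(mulmxA X2) A2sq // mulmx1 A2sq //.
have hs' : M + N = e%:M by rewrite /M /N hsum.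
have rec k : M ^+ k.+2 + N ^+ k.+2 = (M + N) * (M ^+ k.+1 + N ^+ k.+1) - (M ^+ k + N ^+ k).
  rewrite mulrDl !mulrDr.
  have -> : M * N ^+ k.+1 = N ^+ k by rewrite exprS mulrA hMN mul1r.
  have -> : N * M ^+ k.+1 = M ^+ k by rewrite exprS mulrA hNM mul1r.
  rewrite -!exprS.
  apply/eqP; rewrite eq_sym subr_eq; apply/eqP.
  rewrite -!addrA; congr (_ + _).
  by rewrite [RHS]addrCA addrC -addrA.
have key j : M ^+ j.+1 + N ^+ j.+1 = (f_poly j.+1 e)%:M /\
             M ^+ j.+2 + N ^+ j.+2 = (f_poly j.+2 e)%:M.
  elim: j => [|j [IH1 IH2]].
    have P1 : M ^+ 1 + N ^+ 1 = (f_poly 1 e)%:M by rewrite !expr1 f1.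
    split => //.
    rewrite rec P1 !expr0 two sc_rec f1 (f_g 0 e) (g_rec 0 e) /= g0 g1.
    congr (_ %:M); ring.
  split => //.
  have := f_rec j.+1 e isT; rewrite !addn2 !addn1 => ->.
  by rewrite rec IH1 IH2 hs' sc_rec.
case: n hn => // n _.
by case: (key n).
Qed.
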